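(* Let $W_n$ ($n\ge4$) be the wheel graph (a cycle on $n-1$ vertices plus a vertex adjacent to all of them) with any finite initial configuration, and let $u,v$ be adjacent vertices of degree $3$. For every integer $t\geq0$: (a) if $|c_t(u)-c_t(v)|<3$ then $|c_{t+1}(u)-c_{t+1}(v)|\leq 6$; (b) if $|c_t(u)-c_t(v)|\geq 3$ then $|c_{t+1}(u)-c_{t+1}(v)|\leq |c_t(u)-c_t(v)|$.
   Context: Diffusion process: for a configuration $c_t:V(G)\to\mathbb{Z}$, $c_{t+1}(w)=c_t(w)-|\{x\in N(w): c_t(w)>c_t(x)\}|+|\{x\in N(w): c_t(w)<c_t(x)\}|$ for all $w$ simultaneously. *)

(* Defs.v *)
From mathcomp Require Import all_boot all_order all_algebra.
Set Implicit Arguments. Unset Strict Implicit. Unset Printing Implicit Defensive.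
Import Order.TTheory GRing.Theory Num.Theory.

(* Wheel graph W_n on vertex set 'I_n: vertex 0 is the hub, vertices
   1, ..., n-1 form a cycle (i adjacent to i+1, and n-1 adjacent to 1). *)
Definition rim_adj (n i j : nat) : bool :=
  let m := n.-1 in ((i.-1).+1 %% m == j.-1) || ((j.-1).+1 %% m == i.-1).

Definition wheel_adj (n : nat) (x y : 'I_n) : bool :=
  (x != y) && [|| (val x == 0), (val y == 0) | rim_adj n (val x) (val y)].

Definition wdeg (n : nat) (x : 'I_n) : nat := #|[set y | wheel_adj x y]|.

Local Open Scope ring_scope.

Definition diffuse (n : nat) (c : 'I_n -> int) : 'I_n -> int :=
  fun w => c w - (#|[set x | wheel_adj w x & c x < c w]|)%:Z
               + (#|[set x | wheel_adj w x & c w < c x]|)%:Z.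

Definition config (n : nat) (c0 : 'I_n -> int) (t : nat) : 'I_n -> int :=
  iter t (@diffuse n) c0.

(* Main.v *)
Require Import Defs.
From mathcomp Require Import all_boot all_order all_algebra.
From mathcomp Require Import zify.
Import Order.TTheory GRing.Theory Num.Theory.
Local Open Scope ring_scope.

Definition sg2 (a x : int) : int := Posz (nat_of_bool (a < x)) - Posz (nat_of_bool (x < a)).

Lemma arith (a b h Ru Rv : int) : `|Ru| <= 1 -> `|Rv| <= 1 ->
  let a' := a + (sg2 a b + sg2 a h + Ru) in
  let b' := b + (sg2 b a + sg2 b h + Rv) in
  (`|a - b| < 3 -> `|a' - b'| <= 6) /\ (3 <= `|a - b| -> `|a' - b'| <= `|a - b|).
Proof. rewrite /sg2 /=. lia. Qed.

Lemma card_sum (n : nat) (A P : pred 'I_n) :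
  (#|[set x | A x & P x]|)%:Z = \sum_(x | A x) Posz (nat_of_bool (P x)).
Proof.
have -> : (#|[set x | A x & P x]| = \sum_(x | A x) nat_of_bool (P x))%N.
  rewrite -sum1_card (eq_bigl (fun x => A x && P x)); last by move=> x; rewrite inE.
  rewrite big_mkcondr /=; apply: eq_bigr => x _; by case: (P x).
by rewrite (big_morph Posz PoszD (erefl (Posz 0))).
Qed.

Definition S {n} (c : 'I_n -> int) (w : 'I_n) :=
  \sum_(x | wheel_adj w x) sg2 (c w) (c x).

Lemma diffuseE n (c : 'I_n -> int) w : diffuse c w = c w + S c w.
Proof.
rewrite /diffuse /S /sg2 sumrB (@card_sum _ (wheel_adj w) (fun x => c x < c w)).
rewrite (@card_sum _ (wheel_adj w) (fun x => c w < c x)). by rewrite -addrA (addrC (- _)).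
Qed.

Lemma decomp n (c : 'I_n -> int) w p q : wdeg w = 3%N ->
  wheel_adj w p -> wheel_adj w q -> p != q ->
  exists R, `|R| <= 1 /\ S c w = sg2 (c w) (c p) + sg2 (c w) (c q) + R.
Proof.
move=> hd hp hq pq.
have h3 : \sum_(x | wheel_adj w x) (1 : int) = 3.
  have := @card_sum _ (wheel_adj w) (fun _ => true).
  rewrite /= => <-. rewrite (_ : #|_| = 3%N) // -hd /wdeg. apply: eq_card => x.
  by rewrite !inE andbT.
rewrite (bigD1 p) //= (bigD1 q) /= in h3; last by rewrite hq eq_sym.
rewrite /S (bigD1 p) //= (bigD1 q) /=; last by rewrite hq eq_sym.
eexists; split; last by rewrite addrA.
apply: (le_trans (ler_norm_sum _ _ _)).
have e : \sum_(i | (wheel_adj w i && (i != p)) && (i != q)) (1:int) = 1.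
  apply: (addrI (1+1)); rewrite addrA in h3; exact: h3.
rewrite -e; apply: ler_sum => i _. rewrite /sg2. lia.
Qed.

Lemma adj_sym n (x y : 'I_n) : wheel_adj x y = wheel_adj y x.
Proof.
rewrite /wheel_adj /rim_adj eq_sym; congr (_ && _).
set a := (\val x == 0%N); set b := (\val y == 0%N); set c := (_ == (\val y).-1); set d := (_ == (\val x).-1).
by case: a; case: b; case: c; case: d.
Qed.

Lemma hub_nb n (hn : (4 <= n)%N) (u v : 'I_n) : val u = 0%N -> wheel_adj u v ->
  exists h, wheel_adj u h && wheel_adj v h.
Proof.
move=> u0 huv.
have v0 : val v <> 0%N.
  move=> v0; move: huv; rewrite /wheel_adj.
  have e : u = v by apply: val_inj; rewrite u0 v0.
  by rewrite e eqxx.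
have hlt : ((val v %% n.-1).+1 < n)%N.
  have : (val v %% n.-1 < n.-1)%N by rewrite ltn_mod; lia.
  lia.
exists (Ordinal hlt).
rewrite /wheel_adj /rim_adj /= u0 eqxx /=.
have -> : (u != Ordinal hlt) by apply/eqP => /(congr1 val) /=; rewrite u0.
have -> : (v != Ordinal hlt).
  apply/eqP => /(congr1 val) /=.
  have vlt : (val v < n)%N := ltn_ord v.
  case: (ltnP (val v) n.-1) => hv.
    by rewrite modn_small //; lia.
  have -> : val v = n.-1 by lia.
  rewrite modnn; lia.
have -> : (val v).-1.+1 = val v by lia.
rewrite /=; apply/orP; right; apply/orP; left; exact/eqP.
Qed.

Lemma common_nb n (hn : (4 <= n)%N) (u v : 'I_n) : wheel_adj u v ->
  exists h, wheel_adj u h && wheel_adj v h.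
Proof.
move=> huv.
case: (eqVneq (val u) 0%N) => [u0|u0]; first exact: (@hub_nb _ hn _ _ u0 huv).
case: (eqVneq (val v) 0%N) => [v0|v0].
  rewrite adj_sym in huv.
  have [h hh] := @hub_nb _ hn _ _ v0 huv. by exists h; rewrite andbC.
have n0 : (0 < n)%N by lia.
exists (Ordinal n0).
rewrite /wheel_adj /= !orbT !andbT.
apply/andP; split; apply/eqP => /(congr1 val) /= e; [move/eqP: u0|move/eqP: v0]; exact.
Qed.

Theorem lemma8 (n : nat) (hn : (4 <= n)%N) (c0 : 'I_n -> int) (u v : 'I_n)
    (huv : wheel_adj u v) (hu : wdeg u = 3%N) (hv : wdeg v = 3%N) (t : nat) :
  (`|config c0 t u - config c0 t v| < 3 ->
     `|config c0 t.+1 u - config c0 t.+1 v| <= 6) /\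
  (3 <= `|config c0 t u - config c0 t v| ->
     `|config c0 t.+1 u - config c0 t.+1 v| <= `|config c0 t u - config c0 t v|).
Proof.
have -> : config c0 t.+1 = diffuse (config c0 t) by [].
move: (config c0 t) => c.
rewrite !diffuseE.
have [h /andP[hu' hv']] := @common_nb _ hn _ _ huv.
have hvh : v != h by move: hv'; rewrite /wheel_adj => /andP[].
have huh : u != h by move: hu'; rewrite /wheel_adj => /andP[].
have [Ru [Rub ->]] := @decomp _ c _ _ _ hu huv hu' hvh.
have vu : wheel_adj v u by rewrite adj_sym.
have [Rv [Rvb ->]] := @decomp _ c _ _ _ hv vu hv' huh.
exact: arith.
Qed.
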